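(* Let $k\ge 2$ and let $\mathrm{R}_{2k}=\{a_0,a_1,\dots,a_{2k-1}\}$ be the dihedral quandle of order $2k$, i.e. the set $\mathbb{Z}_{2k}$ with operation $a_i\cdot a_j=a_{(2j-i)\bmod 2k}$. In the integral quandle ring $\mathbb{Z}[\mathrm{R}_{2k}]$, let $e_i=a_i-a_0$ for $i=1,\dots,2k-1$. Then $e_i\cdot e_k=0$ for all $i=1,2,\dots,2k-1$.
   Context: The quandle ring $\mathbb{Z}[A]$ of a quandle $A$ is the free abelian group on $A$ with multiplication given by the bilinear extension of the quandle operation: $\left(\sum_i r_i a_i\right)\cdot\left(\sum_j s_j a_j\right)=\sum_{i,j} r_i s_j (a_i\cdot a_j)$. *)

(* Defs.v *)
From mathcomp Require Import all_boot all_order all_algebra.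
Set Implicit Arguments. Unset Strict Implicit. Unset Printing Implicit Defensive.
Import GRing.Theory.
Local Open Scope ring_scope.

(* Dihedral quandle R_m on Z_m = 'I_m with m = n.+1 : a_i . a_j = a_{(2j - i) mod n}.
   Computed as (2j + (m - i)) mod m in nat, which equals (2j - i) mod m. *)
Definition dihedral_op (n : nat) (i j : 'I_n.+1) : 'I_n.+1 :=
  inord ((2 * j + (n.+1 - i)) %% n.+1)%N.

(* Quandle ring Z[A] of a finite quandle (A, op): the free abelian group on A,
   represented as integer-valued functions on A (coefficient of each basis element). *)
Definition qring (A : finType) := {ffun A -> int}.

Definition qbasis (A : finType) (a : A) : qring A := [ffun x => (x == a)%:R].

Definition qmul (A : finType) (op : A -> A -> A) (x y : qring A) : qring A :=
  [ffun c => \sum_(a : A) \sum_(b : A) if op a b == c then x a * y b else 0].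

Definition dih_e (n : nat) (i : 'I_n.+1) : qring 'I_n.+1 :=
  qbasis i - qbasis (ord0 : 'I_n.+1).

(* Main.v *)
Require Import Defs.
From mathcomp Require Import all_boot all_order all_algebra.
Local Open Scope ring_scope.
Import GRing.Theory.

Lemma qmulBl (A : finType) (op : A -> A -> A) (x y z : qring A) :
  qmul op (x - y) z = qmul op x z - qmul op y z.
Proof.
apply/ffunP => c; rewrite !ffunE -sumrB; apply: eq_bigr => a _.
rewrite -sumrB; apply: eq_bigr => b _; rewrite !ffunE.
by case: ifP; rewrite ?subr0 // mulrBl.
Qed.

Lemma qmulBr (A : finType) (op : A -> A -> A) (x y z : qring A) :
  qmul op z (x - y) = qmul op z x - qmul op z y.
Proof.
apply/ffunP => c; rewrite !ffunE -sumrB; apply: eq_bigr => a _.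
rewrite -sumrB; apply: eq_bigr => b _; rewrite !ffunE.
by case: ifP; rewrite ?subr0 // mulrBr.
Qed.

Lemma qmul_basis (A : finType) (op : A -> A -> A) (a b : A) :
  qmul op (qbasis a) (qbasis b) = qbasis (op a b).
Proof.
apply/ffunP => c; rewrite !ffunE (bigD1 a) //=.
rewrite [X in _ + X = _]big1 => [|a' na]; last first.
  apply: big1 => b' _; rewrite !ffunE (negbTE na) mul0r; by case: ifP.
rewrite addr0 (bigD1 b) //=.
rewrite [X in _ + X = _]big1 => [|b' nb]; last first.
  by rewrite !ffunE (negbTE nb) mulr0; case: ifP.
rewrite addr0 !ffunE !eqxx mulr1 eq_sym; by case: (c == op a b).
Qed.

Theorem lemma2p2 (k : nat) (hk : (2 <= k)%N) (i : 'I_(k.*2.-1.+1)) :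
  (0 < i)%N ->
  qmul (@dihedral_op _) (dih_e i) (dih_e (inord k)) = 0.
Proof.
move=> _; rewrite /dih_e !qmulBl !qmulBr !qmul_basis.
have hN : k.*2.-1.+1 = k.*2 by rewrite prednK // double_gt0; exact: leq_trans _ hk.
have hk' : (k < k.*2.-1.+1)%N by rewrite hN -addnn -{1}[k]addn0 ltn_add2l; exact: leq_trans _ hk.
have e1 : dihedral_op i (inord k) = dihedral_op i ord0.
  have h0 : (k.*2 %% k.*2.-1.+1 = 0)%N by rewrite hN modnn.
  by rewrite /dihedral_op /= (inordK hk') muln0 add0n -modnDml mul2n h0 add0n.
have e2 : dihedral_op (ord0 : 'I_(k.*2.-1.+1)) (inord k) = dihedral_op ord0 ord0.
  have h0 : (k.*2 %% k.*2.-1.+1 = 0)%N by rewrite hN modnn.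
  by rewrite /dihedral_op /= (inordK hk') muln0 add0n -modnDml mul2n h0 add0n.
by rewrite e1 e2 subrr subrr subrr.
Qed.
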